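(* Let $x_0\in(0,1)$ and $F(y;x_0)=\frac{e^{(x_0-2)y}-e^{-x_0y}}{2(1-e^{-2y})}$ for $y>0$. Then $F(\cdot;x_0)$ is strictly increasing on $\big(\frac{\ln(2-x_0)-\ln x_0}{2(1-x_0)},\infty\big)$. *)

(* Defs.v *)
From Stdlib Require Import Reals.
Open Scope R_scope.

Definition F (x0 y : R) : R :=
  (exp ((x0 - 2) * y) - exp (- x0 * y)) / (2 * (1 - exp (-2 * y))).

Definition ystar (x0 : R) : R := (ln (2 - x0) - ln x0) / (2 * (1 - x0)).

(* Main.v *)
Require Import Defs.
From Stdlib Require Import Reals Lra.
From Coquelicot Require Import Coquelicot.
Open Scope R_scope.

Lemma mvt_pos (f f' : R -> R) (u v : R) : u < v ->
  (forall t, u <= t <= v -> is_derive f t (f' t)) ->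
  (forall t, u < t < v -> 0 < f' t) -> f u < f v.
Proof.
  intros huv hd hp.
  destruct (MVT_cor2 f f' u v huv) as [t [ht1 ht2]].
  { intros t ht. apply is_derive_Reals. now apply hd. }
  assert (0 < f' t * (v - u)) by (apply Rmult_lt_0_compat; [apply hp; lra | lra]).
  lra.
Qed.

Definition kk (c y : R) :=
  (exp (c*y) - exp (-(c*y))) * (exp y + exp (-y))
  - c * (exp (c*y) + exp (-(c*y))) * (exp y - exp (-y)).

Lemma sh_pos (c y : R) : 0 < c -> 0 < y -> 0 < exp (c*y) - exp (-(c*y)).
Proof.
  intros hc hy. assert (0 < c*y) by nra.
  assert (exp (-(c*y)) < exp (c*y)) by (apply exp_increasing; lra). lra.
Qed.

Lemma kk_pos (c y : R) : 0 < c < 1 -> 0 < y -> 0 < kk c y.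
Proof.
  intros hc hy.
  assert (kk c 0 = 0) as H0.
  { unfold kk. rewrite Rmult_0_r, Ropp_0, exp_0. ring. }
  rewrite <- H0.
  apply (mvt_pos (kk c) (fun t => (1 - c*c) * (exp (c*t) - exp (-(c*t))) * (exp t - exp (-t)))); auto.
  - intros t _. unfold kk. auto_derive; auto. ring.
  - intros t ht. assert (0 < 1 - c*c) by nra.
    pose proof (sh_pos c t (proj1 hc) (proj1 ht)).
    pose proof (sh_pos 1 t ltac:(lra) (proj1 ht)). rewrite Rmult_1_l in H2.
    apply Rmult_lt_0_compat; [apply Rmult_lt_0_compat|]; auto.
Qed.

Definition GG (c y : R) := (exp (c*y) - exp (-(c*y))) / (exp y - exp (-y)).

Lemma GG_decr (c a b : R) : 0 < c < 1 -> 0 < a -> a < b -> GG c b < GG c a.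
Proof.
  intros hc ha hab.
  assert (forall t, 0 < t -> 0 < exp t - exp (-t)) as hD.
  { intros t ht. pose proof (sh_pos 1 t ltac:(lra) ht). rewrite Rmult_1_l in H. exact H. }
  enough (- GG c a < - GG c b) by lra.
  apply (mvt_pos (fun y => - GG c y) (fun t => kk c t / (exp t - exp (-t))^2)); auto.
  - intros t ht. pose proof (hD t ltac:(lra)). unfold GG, kk. auto_derive.
    + lra.
    + field. lra.
  - intros t ht. apply Rdiv_lt_0_compat. apply kk_pos; lra.
    pose proof (hD t ltac:(lra)). nra.
Qed.

Lemma F_eq (x0 y : R) : 0 < y ->
  F x0 y = - GG (1 - x0) y / 2.
Proof.
  intros hy. unfold F, GG.
  set (c := 1 - x0).
  assert (exp ((x0 - 2) * y) = exp (-y) * exp (-(c*y))) as e1.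
  { rewrite <- exp_plus. f_equal. unfold c. ring. }
  assert (exp (- x0 * y) = exp (-y) * exp (c*y)) as e2.
  { rewrite <- exp_plus. f_equal. unfold c. ring. }
  assert (exp (- 2 * y) = exp (-y) * exp (-y)) as e3.
  { rewrite <- exp_plus. f_equal. ring. }
  assert (1 = exp (-y) * exp y) as e4.
  { rewrite <- exp_plus. replace (-y + y) with 0 by ring. now rewrite exp_0. }
  rewrite e1, e2, e3. pattern 1 at 1. rewrite e4.
  assert (0 < exp y - exp (-y)).
  { pose proof (sh_pos 1 y ltac:(lra) hy). rewrite Rmult_1_l in H. exact H. }
  pose proof (exp_pos (-y)).
  field. split; [lra|]. rewrite <- Rmult_minus_distr_l. apply Rmult_integral_contrapositive; split; lra.
Qed.

Theorem mainTheorem8 (x0 : R) (hx0 : 0 < x0 < 1) :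
  forall a b : R, ystar x0 < a -> a < b -> F x0 a < F x0 b.
Proof.
  intros a b ha hab.
  assert (0 < ystar x0).
  { unfold ystar. apply Rdiv_lt_0_compat; [|lra].
    assert (ln x0 < ln (2 - x0)) by (apply ln_increasing; lra). lra. }
  rewrite (F_eq x0 a), (F_eq x0 b) by lra.
  pose proof (GG_decr (1 - x0) a b ltac:(lra) ltac:(lra) hab). lra.
Qed.
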